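(* Let $\mathbf A\in\mathbb R^{m\times n}$ with $0<m<n$ and suppose there is $\Delta>0$ such that $\|\mathbf h\|_1\ge\sqrt{m/\Delta}\,\|\mathbf h\|_2$ for all nonzero $\mathbf h\in\mathrm{Null}(\mathbf A)$. Fix $c>0$ and $\alpha>0$. If $$m\ge\Big(2+\frac{c}{\alpha}\Big)^2k\Delta,$$ then $\big(1+\frac{c}{\alpha}\big)\|\mathbf h_{\mathcal S}\|_1\le\|\mathbf h_{\mathcal S^c}\|_1$ holds for all $\mathbf h\in\mathrm{Null}(\mathbf A)$ and all coordinate sets $\mathcal S$ with $|\mathcal S|\le k$. Consequently, every $k$-sparse $\mathbf x^0$ with $\|\mathbf x^0\|_\infty=c$ is the unique minimizer of problem (P2) with $\mathbf b=\mathbf A\mathbf x^0$.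
   Context: Problem (P2) is $\min_{\mathbf x}\{\|\mathbf x\|_1+\frac{1}{2\alpha}\|\mathbf x\|_2^2:\ \mathbf A\mathbf x=\mathbf b\}$. A vector is $k$-sparse if it has at most $k$ nonzero entries. $\mathbf h_{\mathcal S}$ is the restriction of $\mathbf h$ to coordinates in $\mathcal S$, $\mathcal S^c$ its complement in $\{1,\dots,n\}$. *)

(* Defs.v *)
(* the reals are an arbitrary real closed field R : rcfType
   (the statement is purely order-algebraic, needs only square roots). *)
From HB Require Import structures.
From mathcomp Require Import all_boot all_order all_algebra.
Set Implicit Arguments. Unset Strict Implicit. Unset Printing Implicit Defensive.
Import Order.TTheory GRing.Theory Num.Theory.
Local Open Scope ring_scope.

Section Defs.
Variable R : rcfType.

Definition norm1 n (x : 'cV[R]_n) : R := \sum_(i < n) `|x i 0|.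
Definition norm2 n (x : 'cV[R]_n) : R := Num.sqrt (\sum_(i < n) (x i 0) ^+ 2).
Definition normInf n (x : 'cV[R]_n) : R := \big[Num.max/0]_(i < n) `|x i 0|.

Definition restr n (S : {set 'I_n}) (h : 'cV[R]_n) : 'cV[R]_n :=
  \col_i (if i \in S then h i 0 else 0).

Definition inNull m n (A : 'M[R]_(m, n)) (h : 'cV[R]_n) : Prop := A *m h = 0.

Definition ksparse n (k : nat) (x : 'cV[R]_n) : Prop :=
  (#|[set i : 'I_n | x i ord0 != 0%R]| <= k)%N.

Definition P2obj n (alpha : R) (x : 'cV[R]_n) : R :=
  norm1 x + (2 * alpha)^-1 * (norm2 x) ^+ 2.

Definition P2_unique_minimizer m n (A : 'M[R]_(m, n)) (b : 'cV[R]_m)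
    (alpha : R) (x : 'cV[R]_n) : Prop :=
  A *m x = b /\
  forall y : 'cV[R]_n, A *m y = b -> y <> x -> P2obj alpha x < P2obj alpha y.

End Defs.

(* Main.v *)
Require Import Defs.
From HB Require Import structures.
From mathcomp Require Import all_boot all_order all_algebra.
From mathcomp Require Import lra ring.
Set Implicit Arguments. Unset Strict Implicit. Unset Printing Implicit Defensive.
Import Order.TTheory GRing.Theory Num.Theory.
Local Open Scope ring_scope.

Lemma norm1_ge0 (R : rcfType) n (x : 'cV[R]_n) : 0 <= norm1 x.
Proof. by apply: sumr_ge0 => i _. Qed.

Lemma norm1_split (R : rcfType) n (S : {set 'I_n}) (h : 'cV[R]_n) :
  norm1 h = norm1 (restr S h) + norm1 (restr (~: S) h).
Proof.
rewrite /norm1 -big_split; apply: eq_bigr => i _ /=.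
by rewrite !mxE in_setC; case: (i \in S); rewrite normr0 ?addr0 ?add0r.
Qed.

Lemma cs_restr (R : rcfType) n (S : {set 'I_n}) (h : 'cV[R]_n) :
  norm1 (restr S h) ^+ 2 <= #|S|%:R * \sum_(i < n) (h i 0) ^+ 2.
Proof.
set s := norm1 (restr S h); set Q := \sum_(i < n) (h i 0) ^+ 2.
have Q0 : 0 <= Q by apply: sumr_ge0 => i _; rewrite sqr_ge0.
have s0 : 0 <= s by apply: norm1_ge0.
case: (posnP #|S|) => [S0|Spos].
  have -> : s = 0.
    rewrite /s /norm1 big1 // => i _; rewrite mxE.
    move/eqP: S0; rewrite cards_eq0 => /eqP ->.
    by rewrite in_set0 normr0.
  by rewrite expr0n /= S0 mul0r.
set K : R := #|S|%:R.
have K0 : 0 < K by rewrite ltr0n.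
set t := s / K.
have key : 2 * t * s <= Q + K * t ^+ 2.
  have e1 : 2 * t * s = \sum_(i < n) 2 * t * `|(restr S h) i 0|.
    by rewrite /s /norm1 mulr_sumr.
  have e2 : K * t ^+ 2 = \sum_(i < n) (if i \in S then t ^+ 2 else 0).
    by rewrite -big_mkcond /= sumr_const /K mulr_natl.
  rewrite e1 e2 -big_split /=; apply: ler_sum => i _.
  rewrite mxE; case: (i \in S).
    have := sqr_ge0 (`|h i 0| - t).
    rewrite -(real_normK (num_real (h i 0))) => H; nra.
  rewrite normr0 mulr0 addr0 sqr_ge0 //.
have st : s = K * t by rewrite /t mulrC divfK // gt_eqF.
have : K * t ^+ 2 <= Q by nra.
move=> H; rewrite st; nra.
Qed.

Lemma part1 (R : rcfType) (m n k : nat) (A : 'M[R]_(m, n))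
  (Delta c alpha : R) (hDelta : 0 < Delta)
  (hnull : forall h : 'cV[R]_n, inNull A h -> h != 0 ->
      Num.sqrt (m%:R / Delta) * norm2 h <= norm1 h)
  (hc : 0 < c) (halpha : 0 < alpha)
  (hmk : (2 + c / alpha) ^+ 2 * k%:R * Delta <= m%:R)
  (h : 'cV[R]_n) (S : {set 'I_n}) : inNull A h -> (#|S| <= k)%N ->
      (1 + c / alpha) * norm1 (restr S h) <= norm1 (restr (~: S) h).
Proof.
move=> hN hS.
have ca : 0 < c / alpha by rewrite divr_gt0.
set D := 2 + c / alpha.
have sp := norm1_split S h.
have s0 := norm1_ge0 (restr S h).
have t0 := norm1_ge0 (restr (~: S) h).
suff : D * norm1 (restr S h) <= norm1 h by rewrite sp /D; lra.
have [->|hn0] := eqVneq h 0.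
  have z : forall T : {set 'I_n}, norm1 (restr T (0 : 'cV[R]_n)) = 0.
    by move=> T; rewrite /norm1 big1 // => i _; rewrite !mxE; case: (_ \in _); rewrite normr0.
  have z0 : norm1 (0 : 'cV[R]_n) = 0 by rewrite /norm1 big1 // => i _; rewrite mxE normr0.
  by rewrite z z0 mulr0.
have H1 := hnull h hN hn0.
set Q := \sum_(i < n) (h i 0) ^+ 2.
have Q0 : 0 <= Q by apply: sumr_ge0 => i _; rewrite sqr_ge0.
set M := m%:R / Delta.
have M0 : 0 <= M by rewrite divr_ge0 // ltW.
have DkM : D ^+ 2 * k%:R <= M by rewrite /M ler_pdivlMr.
have cs := cs_restr S h.
have kS : (#|S|%:R : R) <= k%:R by rewrite ler_nat.
set u := Num.sqrt M * norm2 h.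
have u0 : 0 <= u by rewrite mulr_ge0 // sqrtr_ge0.
have u2 : u ^+ 2 = M * Q by rewrite /u exprMn /norm2 !sqr_sqrtr.
have D0 : 0 <= D by rewrite /D; lra.
have Q1 : #|S|%:R * Q <= k%:R * Q by rewrite ler_wpM2r.
set s := norm1 (restr S h).
have sq : (D * s) ^+ 2 <= u ^+ 2.
  rewrite u2 exprMn; apply: (le_trans (ler_wpM2l (sqr_ge0 D) (le_trans cs Q1))).
  by rewrite mulrA ler_wpM2r.
have Ds0 : 0 <= D * s by rewrite mulr_ge0.
apply: (le_trans _ H1); rewrite -/u.
nra.
Qed.

Lemma sq_norm2 (R : rcfType) n (x : 'cV[R]_n) :
  norm2 x ^+ 2 = \sum_(i < n) (x i 0) ^+ 2.
Proof. by rewrite /norm2 sqr_sqrtr //; apply: sumr_ge0 => i _; rewrite sqr_ge0. Qed.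

Theorem mainTheorem5 (R : rcfType) (m n k : nat) (A : 'M[R]_(m, n))
  (Delta c alpha : R)
  (hm : (0 < m)%N) (hmn : (m < n)%N) (hDelta : 0 < Delta)
  (hnull : forall h : 'cV[R]_n, inNull A h -> h != 0 ->
      Num.sqrt (m%:R / Delta) * norm2 h <= norm1 h)
  (hc : 0 < c) (halpha : 0 < alpha)
  (hmk : (2 + c / alpha) ^+ 2 * k%:R * Delta <= m%:R) :
  (forall (h : 'cV[R]_n) (S : {set 'I_n}), inNull A h -> (#|S| <= k)%N ->
      (1 + c / alpha) * norm1 (restr S h) <= norm1 (restr (~: S) h))
  /\
  (forall x0 : 'cV[R]_n, ksparse k x0 -> normInf x0 = c ->
      P2_unique_minimizer A (A *m x0) alpha x0).
Proof.
have P1 := part1 hDelta hnull hc halpha hmk.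
split; first exact: P1.
move=> x0 hsp hinf; split => // y hy hyx.
set h := y - x0.
have hN : inNull A h by rewrite /inNull /h mulmxBr hy subrr.
have hn0 : h != 0 by rewrite /h subr_eq0; apply/eqP.
have ey : y = x0 + h by rewrite /h addrC subrK.
clearbody h; subst y.
set S := [set i : 'I_n | x0 i ord0 != 0].
have P := P1 h S hN hsp.
have bnd : forall i, `|x0 i 0| <= c by move=> i; rewrite -hinf; exact: le_bigmax.
set ia := alpha^-1.
have ia0 : 0 < ia by rewrite invr_gt0.
set a' := (2 * alpha)^-1.
have ea : a' = ia / 2 by rewrite /a' invfM mulrC.
set s := norm1 (restr S h); set t := norm1 (restr (~: S) h).
set Q := \sum_(i < n) (h i 0) ^+ 2.
have Qpos : 0 < Q.
  case: (boolP [exists i, h i 0 != 0]) => [/existsP [i hi]|/existsPn hall].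
    rewrite /Q (bigD1 i) //=; apply: ltr_pwDl; first by rewrite lt_def sqrf_eq0 hi sqr_ge0.
    by apply: sumr_ge0 => j _; rewrite sqr_ge0.
  move/negP: hn0; case; apply/eqP; apply/matrixP => i j; rewrite ord1.
  by move: (hall i); rewrite negbK => /eqP ->; rewrite mxE.
rewrite /P2obj !sq_norm2.
have eR : norm1 (x0 + h) + a' * \sum_(i < n) (x0 + h) i 0 ^+ 2 - (norm1 x0 + a' * \sum_(i < n) x0 i 0 ^+ 2)
   = \sum_(i < n) (`|(x0 + h) i 0| - `|x0 i 0| + a' * ((x0 + h) i 0 ^+ 2 - x0 i 0 ^+ 2)).
  rewrite !big_split /= sumrN -mulr_sumr big_split /= sumrN /norm1; ring.
have eL : t - (1 + c / alpha) * s + a' * Q =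
   \sum_(i < n) (`|restr (~: S) h i 0| - (1 + c * ia) * `|restr S h i 0| + a' * h i 0 ^+ 2).
  rewrite !big_split /= sumrN -!mulr_sumr /t /s /Q /norm1 /ia; ring.
have LR : t - (1 + c / alpha) * s + a' * Q <=
  norm1 (x0 + h) + a' * \sum_(i < n) (x0 + h) i 0 ^+ 2 - (norm1 x0 + a' * \sum_(i < n) x0 i 0 ^+ 2).
  rewrite eR eL; apply: ler_sum => i _.
  rewrite !mxE in_setC inE.
  case: eqP => [->|_] /=.
    by rewrite normr0 mulr0 subr0 add0r; lra.
  move: (bnd i); set a := x0 i 0; set b := h i 0 => ba.
  have k0 : - (`|a| * `|b|) <= a * b.
    by rewrite -normrM; have := ler_norm (- (a * b)); rewrite normrN; lra.
  have k1 : - (c * ia * `|b|) <= ia * (a * b).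
    have : - (c * `|b|) <= a * b.
      by apply: le_trans k0; rewrite lerN2 ler_wpM2r.
    move=> H; have := ler_wpM2l (ltW ia0) H; by rewrite mulrN mulrA [ia * c]mulrC.
  have k2 : `|a| - `|b| <= `|a + b|.
    exact: lerB_normD.
  have E : a' * ((a + b) ^+ 2 - a ^+ 2) = ia * (a * b) + a' * b ^+ 2 by rewrite ea; field.
  rewrite E normr0; nra.
have : 0 < t - (1 + c / alpha) * s + a' * Q.
  have P2 : (1 + c / alpha) * s <= t := P.
  have : 0 < a' * Q by rewrite mulr_gt0 // invr_gt0 mulr_gt0.
  lra.
move=> H; rewrite -/a'; lra.
Qed.
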